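(* The set $\mathcal{AN}_{\operatorname{add}(\mathcal N)}$ is strongly $\mathfrak c$-algebrable in $\left(\mathbb R^{\mathbb R}\right)^{\operatorname{add}(\mathcal N)}$ (in ZFC).
   Context: For a regular infinite cardinal $\kappa$, a $\kappa$-sequence $(x_\alpha)_{\alpha<\kappa}$ converges to $x$ if for every neighbourhood $U$ of $x$ there is $\alpha_0<\kappa$ with $x_\alpha\in U$ for all $\alpha_0<\alpha<\kappa$; $\left(\mathbb R^{\mathbb R}\right)^{\kappa}$ is the commutative real algebra of $\kappa$-sequences of functions $\mathbb R\to\mathbb R$ with indexwise operations. $\operatorname{add}(\mathcal N)$ is the least cardinality of a family of Lebesgue null sets whose union is not null. $\mathcal{AN}_{\kappa}$: $\kappa$-sequences of Lebesgue measurable functions $f_\alpha:\mathbb R\to\mathbb R$ converging pointwise a.e. to a function that is not Lebesgue measurable. $S$ is strongly $\mu$-algebrable if there is a set $X$ of $\mu$ algebraically independent elements such that every nonzero element of the (non-unital) algebra generated by $X$ belongs to $S$. *)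

(* Defs.v *)
Set Warnings "-all".
From mathcomp Require Import all_boot all_order all_algebra.
From mathcomp Require Import mpoly.
From mathcomp Require Import all_classical all_reals all_analysis.
Set Implicit Arguments. Unset Strict Implicit. Unset Printing Implicit Defensive.
Import Order.TTheory GRing.Theory Num.Theory numFieldNormedType.Exports.
Local Open Scope classical_set_scope.
Local Open Scope ring_scope.
Local Open Scope card_scope.

(* The real line with the Lebesgue (= completed, Caratheodory) sigma-algebra. *)
Definition lebesgueR (R : realType) :=
  caratheodory_type ((wlength (R:=R) idfun)^*)%mu.

Definition Lmeasurable_fun (R : realType) (f : R -> R) : Prop :=
  @measurable_fun _ _ (lebesgueR R) R [set: lebesgueR R] f.

Definition Lnull (R : realType) (A : set R) : Prop :=
  (@lebesgue_measure R).-negligible A.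

Definition strict_wellorder (K : Type) (lt : K -> K -> Prop) : Prop :=
  [/\ forall a, ~ lt a a,
      forall a b c, lt a b -> lt b c -> lt a c,
      forall a b, [\/ lt a b, a = b | lt b a]
    & well_founded lt].

(* (K, lt) is (order-isomorphic to) an initial ordinal, i.e. a cardinal
   viewed as an ordinal: every proper initial segment has smaller cardinality. *)
Definition initial_ordinal (K : Type) (lt : K -> K -> Prop) : Prop :=
  strict_wellorder lt /\
  forall a : K, ~ ([set: K] #<= [set b | lt b a]).

(* The cardinality of K is add(N): some K-indexed family of null sets has a
   non-null union, and every family of null sets of cardinality < |K| has a
   null union. *)
Definition card_is_addN (R : realType) (K : Type) : Prop :=
  (exists F : K -> set R, (forall a, Lnull (F a)) /\ ~ Lnull (\bigcup_a F a)) /\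
  (forall FF : set (set R),
      FF #<= [set: K] -> ~ ([set: K] #<= FF) ->
      (forall A, FF A -> Lnull A) -> Lnull (\bigcup_(A in FF) A)).

Definition kconverges (R : realType) (K : Type) (lt : K -> K -> Prop)
    (x : K -> R) (l : R) : Prop :=
  forall U : set R, nbhs l U ->
    exists a0 : K, forall a, lt a0 a -> U (x a).

Definition AN (R : realType) (K : Type) (lt : K -> K -> Prop)
    (f : K -> R -> R) : Prop :=
  (forall a, Lmeasurable_fun (f a)) /\
  exists g : R -> R, ~ Lmeasurable_fun g /\
    {ae (@lebesgue_measure R), forall t, kconverges lt (fun a => f a t) (g t)}.

(* Evaluation of a polynomial in n variables at elements of the commutative
   algebra (R^R)^K with indexwise (and pointwise) operations. *)
Definition peval (R : realType) (K : Type) (n : nat)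
    (P : mpoly.mpoly n R) (x : 'I_n -> K -> R -> R) : K -> R -> R :=
  fun a t => mpoly.meval (fun i => x i a t) P.

(* S is strongly mu-algebrable in (R^R)^K, with mu the cardinality of the set M:
   there is a set X of cardinality |M| of algebraically independent elements
   such that every nonzero element of the (non-unital) algebra generated by X
   lies in S. *)
Definition strongly_algebrable (R : realType) (K : Type) (M : Type)
    (S : set (K -> R -> R)) : Prop :=
  exists X : set (K -> R -> R),
    X #= [set: M] /\
    (forall (n : nat) (x : 'I_n -> K -> R -> R) (P : mpoly.mpoly n R),
        injective x -> (forall i, X (x i)) -> P != 0 ->
        peval P x <> (fun _ _ => 0)) /\
    (forall (n : nat) (x : 'I_n -> K -> R -> R) (P : mpoly.mpoly n R),
        (forall i, X (x i)) -> mpoly.mcoeff (@mpoly.mnm0 n) P = 0 ->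
        peval P x <> (fun _ _ => 0) -> S (peval P x)).

(* Main.v *)
Require Import Defs.
From mathcomp Require Import all_boot all_order all_algebra.
From mathcomp Require Import mpoly.
From mathcomp Require Import all_classical all_reals all_analysis.
From mathcomp Require Import ring lra.
From Stdlib Require FunctionalExtensionality.
Import Order.TTheory GRing.Theory Num.Theory numFieldNormedType.Exports.
Local Open Scope classical_set_scope.
Local Open Scope ring_scope.

Lemma mmap_muni (R S : comNzRingType) (f : {rmorphism R -> S}) n
  (h : 'I_n.+1 -> S) (p : {mpoly R[n.+1]}) :
  mmap f h p = (map_poly (mmap f (fun i => h (widen_ord (leqnSn n) i))) (muni p)).[h ord_max].
Proof.
rewrite muniE [in LHS](mpolyE p) !raddf_sum /= horner_sum.
apply: eq_bigr => m _.
rewrite mmapZ mmapX -mul_polyC rmorphM /= map_polyC map_polyXn hornerE.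
rewrite hornerXn /= mmapZ mmapX /mmap1 big_ord_recr /= -mulrA; congr (_ * (_ * _)).
by apply: eq_bigr => i _; rewrite mnmE.
Qed.

Lemma poly_rat_root0 (R : numFieldType) (u : {poly R}) :
  (forall q : rat, u.[ratr q] = 0) -> u = 0.
Proof.
move=> H; apply/eqP; apply: contraT => u0.
have := @max_poly_roots _ u [seq i%:R | i <- iota 0 (size u)] u0.
rewrite size_map size_iota ltnn; apply.
  apply/allP => x /mapP [i _ ->]; apply/rootP.
  by rewrite -(ratr_nat R i) H.
rewrite map_inj_uniq ?iota_uniq // => i j /eqP.
by rewrite eqr_nat => /eqP.
Qed.

Lemma mpoly_rat_zero (R : numFieldType) n (p : {mpoly R[n]}) :
  (forall w : 'I_n -> rat, meval (fun i => ratr (w i)) p = 0) -> p = 0.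
Proof.
elim: n p => [|n IH] p H.
  have := H (fun _ => 0); rewrite {1}(nvar0_mpolyC p) mevalC => e.
  by rewrite (nvar0_mpolyC p) e.
have Hc k : (muni p)`_k = 0.
  apply: IH => w'.
  set u := map_poly (meval (fun i => ratr (w' i))) (muni p).
  suff uz: u = 0 by have := congr1 (fun v : {poly R} => v`_k) uz; rewrite /= coef_map /= coef0.
  apply: poly_rat_root0 => q.
  pose w : 'I_n.+1 -> rat := fun i =>
    match unlift ord_max i with Some j => w' j | None => q end.
  have := H w; rewrite /meval mmap_muni.
  have -> : (fun i : 'I_n => ratr (w (widen_ord (leqnSn n) i)) : R) =
            (fun i => ratr (w' i)).
    apply: FunctionalExtensionality.functional_extensionality => i; rewrite /w.
    have -> : widen_ord (leqnSn n) i = lift ord_max i by apply: val_inj; rewrite /= /bump leqNgt ltn_ord add0n.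
    by rewrite liftK.
  by rewrite /w unlift_none.
have mu0 : muni p = 0 by apply/polyP => k; rewrite Hc coef0.
have := comp_mpoly_id p; rewrite /comp_mpoly /= mmap_muni mu0 rmorph0 horner0.
by move=> <-.
Qed.

Lemma prod0_mnm (R : comNzRingType) n (m : 'X_{1..n}) :
  \prod_(i < n) (0 : R) ^+ m i = (m == 0%MM)%:R.
Proof.
case: eqP => [->|nz].
  by rewrite big1 // => i _; rewrite mnm0E expr0.
have : [exists i, m i != 0%N].
  apply: contraT => /existsPn H; exfalso; apply: nz; apply/mnmP => i; rewrite mnm0E.
  by apply/eqP; move: (H i); rewrite negbK.
case/existsP => i mi.
by rewrite (bigD1 i) //= expr0n (negbTE mi) mul0r.
Qed.

Lemma meval_zero (R : comNzRingType) n (p : {mpoly R[n]}) :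
  meval (fun _ => 0) p = p@_0%MM.
Proof.
rewrite [in LHS](mpolyE p) [in RHS](mpolyE p) !raddf_sum /=.
apply: eq_bigr => m _; rewrite mevalZ mevalX mcoeffZ mcoeffX prod0_mnm.
done.
Qed.

Section Indep.
Variable R : realType.

Definition Hfam (r : R) (d : nat) : R :=
  if (unpickle d : option (seq (rat * rat * rat))) is Some s then
    \sum_(x <- s) (if (ratr x.1.1 < r) && (r < ratr x.1.2) then ratr x.2 else 0)
  else 0.

Lemma Hfam_witness n (r : 'I_n -> R) (w : 'I_n -> rat) : injective r ->
  exists d, forall i, Hfam (r i) d = ratr (w i).
Proof.
move=> rinj.
have sep i : exists lh : rat * rat, ((ratr lh.1 < r i) && (r i < ratr lh.2)) /\
    forall j, j != i -> ~~ ((ratr lh.1 < r j) && (r j < ratr lh.2)).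
  pose e := \big[Order.min/1]_(j | j != i) `|r i - r j|.
  have e0 : 0 < e.
    apply: lt_bigmin => // j ji; rewrite normr_gt0 subr_eq0.
    by apply/eqP => /rinj /eqP; rewrite eq_sym (negbTE ji).
  have [lo lo_in] := @rat_in_itvoo R (r i - e) (r i) ltac:(by rewrite ltrBlDr ltrDl).
  have [hi hi_in] := @rat_in_itvoo R (r i) (r i + e) ltac:(by rewrite ltrDl).
  move: lo_in hi_in; rewrite !in_itv /= => /andP [l1 l2] /andP [h1 h2].
  exists (lo, hi); split => /=; first by rewrite l2 h1.
  move=> j ji; apply/negP => /andP [j1 j2].
  have ej : e <= `|r i - r j| := @bigmin_le_cond _ _ _ 1 j (fun j => j != i) (fun j => `|r i - r j|) ji.
  have : `|r i - r j| < e.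
    rewrite ltr_norml; apply/andP; split; lra.
  by rewrite ltNge ej.
have [lh Hlh] := choice sep.
pose s := [seq ((lh i).1, (lh i).2, w i) | i <- enum 'I_n].
exists (pickle s) => i; rewrite /Hfam pickleK big_map big_enum /=.
rewrite (bigD1 i) //= (Hlh i).1 big1 ?addr0 // => j ji.
by rewrite (negbTE ((Hlh j).2 i _)) // eq_sym.
Qed.

End Indep.

Section Shift.
Variable R : realType.
Local Notation l := ((wlength (R:=R) idfun)^*)%mu.

Definition sh (c : R) (A : set R) : set R := [set t | A (t - c)].

Lemma shK c A : sh (- c) (sh c A) = A.
Proof. by apply/seteqP; split => t; rewrite /sh /= opprK addrK. Qed.

Lemma sh_ocitv c (A : set (ocitv_type R)) :
  ocitv A -> ocitv (sh c A : set (ocitv_type R)) /\ wlength idfun (sh c A : set (ocitv_type R)) = wlength idfun A.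
Proof.
move=> /ocitvP [->|[[a b] /= ab ->]].
  have -> : sh c set0 = set0 by apply/seteqP; split => t.
  by split => //; exact: ocitv0.
have -> : sh c `]a, b]%classic = `]a + c, b + c]%classic.
  by apply/seteqP; split => t; rewrite /sh /= !in_itv /= ltrBrDr lerBlDr.
split; first exact: is_ocitv.
rewrite !wlength_itv /= !lte_fin ltrD2r ab.
by congr (_%:E); rewrite /= opprD addrACA subrr addr0.
Qed.

Lemma l_sh_le c (A : set R) : (l (sh c A : set (ocitv_type R)) <= l A)%E.
Proof.
apply: le_ereal_inf => _ [F [mF AF] <-].
exists (fun k => sh c (F k)).
  split.
    by move=> k; have [] := sh_ocitv c _ (mF k).
  by move=> t /= /AF [k _ Fk]; exists k.
by apply: eq_eseriesr => k _; have [] := sh_ocitv c _ (mF k).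
Qed.

Lemma l_sh c (A : set R) : l (sh c A : set (ocitv_type R)) = l A.
Proof.
apply/eqP; rewrite eq_le l_sh_le /=.
by rewrite -{1}(shK c A) l_sh_le.
Qed.

Lemma shI c (A B : set R) : sh c (A `&` B) = sh c A `&` sh c B.
Proof. by []. Qed.

Lemma shC c (A : set R) : sh c (~` A) = ~` sh c A.
Proof. by []. Qed.

Lemma cara_sh c (A : set R) : l.-caratheodory A -> l.-caratheodory (sh c A).
Proof.
move=> cA X; have := cA (sh (- c) X).
have e1 : X `&` sh c A = sh c (sh (- c) X `&` A).
  by apply/seteqP; split => t; rewrite /sh /= opprK subrK.
have e2 : X `&` ~` sh c A = sh c (sh (- c) X `&` ~` A).
  by apply/seteqP; split => t; rewrite /sh /= opprK subrK.
by rewrite e1 e2 !l_sh.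
Qed.

Lemma cara_shE c (A : set R) : l.-caratheodory (sh c A) -> l.-caratheodory A.
Proof. by move=> /(cara_sh (- c)); rewrite shK. Qed.


Lemma l_itv (x y : R) : (x <= y)%R -> l `]x, y]%classic = (y - x)%:E.
Proof.
move=> xy; rewrite -[LHS]/(lebesgue_measure `]x, y]%classic) lebesgue_measure_itv /=.
by rewrite lte_fin; case: ltgtP xy => // -> _; rewrite subrr.
Qed.

Lemma vitali (b : R) (E : set R) : E `<=` `]- b, b]%classic -> l E != 0%E ->
  exists V, V `<=` E /\ ~ l.-caratheodory V.
Proof.
move=> Eb En0.
pose rel (x y : R) := exists q : rat, x - y = ratr q.
have relxx x : rel x x by exists 0; rewrite subrr rmorph0.
have relC x y : rel x y -> rel y x.
  by move=> [q e]; exists (- q); rewrite rmorphN /= -e opprB.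
have relT x y z : rel x y -> rel y z -> rel x z.
  by move=> [q e] [q' e']; exists (q + q'); rewrite rmorphD /= -e -e' addrA subrK.
pose C x := [set y | E y /\ rel x y].
pose rep x := xget 0 (C x).
have Ceq x y : rel x y -> C x = C y.
  move=> rxy; apply/seteqP; split => z [Ez r]; split => //.
    exact: relT (relC _ _ rxy) r.
  exact: relT rxy r.
have repC x : E x -> C x (rep x).
  by move=> Ex; exact: (@xgetI _ 0 (C x) x (conj Ex (relxx x))).
pose V := [set y | E y /\ rep y = y].
have VE : V `<=` E by move=> y [].
have repV x : E x -> V (rep x) /\ rel x (rep x).
  move=> Ex; have [Er rx] := repC x Ex; split => //; split => //.
  by rewrite /rep -(Ceq _ _ rx).
have Vinj y1 y2 : V y1 -> V y2 -> rel y1 y2 -> y1 = y2.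
  by move=> [_ e1] [_ e2] r; rewrite -e1 -e2 /rep (Ceq _ _ r).
exists V; split => // cV.
have [V0|Vn0] := eqVneq (l V) 0%E.
  pose S n := if (unpickle n : option rat) is Some q then sh (ratr q) V else set0.
  have ES : E `<=` \bigcup_n S n.
    move=> x Ex; have [Vr [q e]] := repV x Ex.
    exists (pickle q); first by [].
    rewrite /S pickleK /sh /=.
    by rewrite -e opprB addrC subrK.
  suff h : (l E <= 0)%E by move/negP: En0; apply; rewrite eq_le h outer_measure_ge0.
  apply: (le_trans (le_outer_measure l _ _ ES)).
  apply: (le_trans (outer_measure_sigma_subadditive _ S)).
  rewrite eseries0 // => n _ _; rewrite /S.
  case: (unpickle n) => [q|]; last by rewrite outer_measure0.
  exact: (etrans (l_sh (ratr q) V) V0).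
have [x0 Vx0] : exists x, V x.
  apply: contrapT => nV; move/negP: Vn0; apply; apply/eqP.
  have -> : V = set0 by apply/seteqP; split => // x Vx; apply: nV; exists x.
  exact: outer_measure0.
have [bx0 bx1] : (- b < x0)%R /\ (x0 <= b)%R.
  by have := Eb x0 (VE x0 Vx0); rewrite /= in_itv /= => /andP.
pose a (k : nat) : R := (k.+1%:R)^-1.
have a_rat k : a k = ratr (k.+1%:Q)^-1 by rewrite /a fmorphV /= ratr_nat.
have a_gt0 k : (0 < a k)%R by rewrite /a invr_gt0 ltr0n.
have a_le1 k : (a k <= 1)%R by rewrite /a invf_le1 ?ler1n ?ltr0n.
pose T k := sh (a k) V.
have mT k : measurable (T k : set (lebesgueR R)) := cara_sh (a k) V cV.
have tT : trivIset setT T.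
  move=> i j _ _ [t [Vi Vj]].
  have r : rel (t - a i) (t - a j).
    exists ((j.+1%:Q)^-1 - (i.+1%:Q)^-1).
    by rewrite rmorphB /= -!a_rat opprB addrC addrA subrK.
  move: (Vinj _ _ Vi Vj r) => /addrI /oppr_inj /invr_inj /eqP.
  by rewrite eqr_nat eqSS => /eqP.
have mU : measurable (\bigcup_k T k : set (lebesgueR R)) by exact: bigcupT_measurable.
have Ueq := measure_semi_bigcup (@completed_lebesgue_measure R) mT tT mU.
have Ub : (l (\bigcup_k T k) <= (b + 1 - - b)%:E)%E.
  rewrite -l_itv; last by apply: (le_trans (ltW bx0)); rewrite (le_trans bx1) // lerDl.
  apply: le_outer_measure => t [k _ Tk].
  have := Eb _ (VE _ Tk); rewrite /= !in_itv /= => /andP [h1 h2].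
  apply/andP; split.
    by rewrite (lt_le_trans h1) // lerBlDr lerDl ltW.
  by rewrite -lerBlDr; apply: le_trans h2; rewrite lerD2l lerN2 a_le1.
have Ueq' : l (\bigcup_k T k) = (\sum_(0 <= i <oo) l (T i))%E := Ueq.
have hN N : (\sum_(0 <= i < N) l V <= (b + 1 - - b)%:E)%E.
  apply: le_trans Ub.
  have -> : (\sum_(0 <= i < N) l V = \sum_(0 <= i < N) l (T i))%E.
    by apply: eq_bigr => i _; exact: (esym (l_sh (a i) V)).
  rewrite Ueq'; apply: nneseries_lim_ge => n _ _; exact: outer_measure_ge0.
have c0 : (0 <= l V)%E by exact: outer_measure_ge0.
move: Vn0 c0 hN; case: (l V) => [r| |] //.
- move=> r0 r0' hN.
  have rp : (0 < r)%R by rewrite -lte_fin lt_def r0 r0'.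
  set M := (b + 1 - - b)%R.
  have Mr : (0 <= M / r)%R by rewrite divr_ge0 // ?ltW // /M; lra.
  have := hN (Num.Def.archi_bound (M / r)).
  rewrite sumEFin lee_fin sumr_const_nat subn0 -mulr_natr.
  have := archi_boundP Mr; rewrite ltr_pdivrMr // mulrC.
  by move=> h1 h2; have := lt_le_trans h1 h2; rewrite ltxx.
- by move=> _ _ /(_ 1%N); rewrite big_nat1.
Qed.

End Shift.

Section Null.
Variable R : realType.
Local Notation l := ((wlength (R:=R) idfun)^*)%mu.

Lemma Lnull_l (A : set R) : Lnull A <-> l A = 0%E.
Proof. exact: negligible_outer_measure. Qed.

Lemma l_sub0 (A N : set R) : A `<=` N -> l N = 0%E -> l A = 0%E.
Proof.
move=> AN N0; apply/eqP; rewrite eq_le outer_measure_ge0 andbT -N0.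
exact: le_outer_measure.
Qed.

Lemma null_cara (A : set R) : l A = 0%E -> l.-caratheodory A.
Proof.
move=> A0 X; apply/eqP; rewrite eq_le (le_outer_measureIC l) /=.
have -> : l (X `&` A) = 0%E by apply: (@l_sub0 (X `&` A) A) => // t [].
by rewrite add0e le_outer_measure // => t [].
Qed.

Lemma null_meas (f : R -> R) (N : set R) : l N = 0%E ->
  (forall t, ~ N t -> f t = 0) -> Lmeasurable_fun f.
Proof.
move=> N0 fN _ Y mY; rewrite setTI.
have [Y0|Y0] := pselect (Y 0).
  have -> : f @^-1` Y = ~` (N `&` ~` (f @^-1` Y)).
    apply/seteqP; split => t /=.
      by move=> Yt [_ []].
    move=> h; have [Nt|Nt] := pselect (N t).
      by apply: contrapT => nY; apply: h.
    by rewrite fN.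
  apply: (@measurableC _ (lebesgueR R)).
  by apply: null_cara; apply: l_sub0 N0; apply: subIset; left.
apply: null_cara; apply: l_sub0 N0 => t /= Yt.
by apply: contrapT => Nt; apply: Y0; rewrite -(fN t Nt).
Qed.

Lemma nonmeas_sub (U : set R) : l U != 0%E ->
  exists (b : R) (V : set R), [/\ (0 <= b)%R, V `<=` U, V `<=` `]- b, b]%classic
    & ~ l.-caratheodory V].
Proof.
move=> U0.
have [n Un] : exists n : nat, l (U `&` `]- n%:R, n%:R]%classic) != 0%E.
  apply: contrapT => /forallNP H; move/negP: U0; apply.
  rewrite eq_le outer_measure_ge0 andbT.
  pose S (n : nat) := U `&` `]- n%:R, n%:R]%classic.
  have US : U `<=` \bigcup_n S n.
    move=> t Ut; have := archi_boundP (normr_ge0 t).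
    set k := Num.Def.archi_bound _ => tk.
    exists k => //; split => //=; rewrite in_itv /=.
    have [h1 h2] := ltr_normlP _ _ tk.
    by rewrite ltrNl h1 ltW.
  apply: (le_trans (le_outer_measure l _ _ US)).
  apply: (le_trans (outer_measure_sigma_subadditive l S)).
  rewrite eseries0 // => k _ _.
  by have := H k; move/negP; rewrite negbK => /eqP.
have [V [VE nV]] := @vitali R n%:R (U `&` `]- n%:R, n%:R]%classic) (fun t => @proj2 _ _) Un.
exists n%:R, V; split => //.
  by move=> t /VE [].
by move=> t /VE [].
Qed.

End Null.


Arguments sh {R}.
Arguments l_sh {R}.
Arguments cara_sh {R}.
Arguments cara_shE {R}.
Arguments Hfam {R}.
Arguments Hfam_witness {R}.
Arguments null_meas {R}.
Arguments nonmeas_sub {R}.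
Arguments Lnull_l {R}.
Arguments l_sub0 {R}.
Arguments null_cara {R}.

Section Main.
Variables (R : realType) (K : Type) (lt : K -> K -> Prop).
Variable F : K -> set R.
Hypothesis Fnull : forall a, Lnull (F a).
Hypothesis Unn : ~ Lnull (\bigcup_a F a).
Hypothesis small : forall FF : set (set R),
      (FF #<= [set: K])%card -> ~ ([set: K] #<= FF)%card ->
      (forall A, FF A -> Lnull A) -> Lnull (\bigcup_(A in FF) A).
Hypothesis seg : forall a : K, ~ ([set: K] #<= [set b | lt b a])%card.
Hypothesis tri : forall a b, [\/ lt a b, a = b | lt b a].
Local Notation l := ((wlength (R:=R) idfun)^*)%mu.

Definition Nset a := [set t | exists2 b, lt b a & F b t].

Lemma Nset_null a : l (Nset a) = 0%E.
Proof.
have h : Lnull (\bigcup_(A in [set F b | b in [set b | lt b a]]) A).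
  apply: small.
  - exact: card_le_trans (card_image_le _ _) (subset_card_le (@subsetT _ _)).
  - move=> h; apply: (seg a); exact: card_le_trans h (card_image_le _ _).
  - by move=> A [b _ <-]; exact: Fnull.
move/Lnull_l: h => h; apply: (l_sub0 _ _ _ h) => t [b ba Fbt].
by exists (F b) => //; exists b.
Qed.

Definition Uset := [set t | exists a, Nset a t].

Lemma Uset_nonnull : l Uset != 0%E.
Proof.
apply/negP => /eqP U0; apply: Unn.
have U'n : Lnull Uset by apply/Lnull_l.
have [[m mmax]|nomax] := pselect (exists m, forall b, ~ lt m b).
  apply: (negligibleS _ (negligibleU U'n (Fnull m))) => t [b _ Fbt].
  case: (tri b m) => [bm|<-|mb]; last by case: (mmax b mb).
    by left; exists m; exists b.
  by right.
apply: (negligibleS _ U'n) => t [b _ Fbt].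
have [a ba] : exists a, lt b a.
  apply: contrapT => H; apply: nomax; exists b => c bc; apply: H; by exists c.
by exists a; exists b.
Qed.


Section Cells.
Variables (b0 : R) (V : set R).
Hypotheses (b0ge : 0 <= b0) (VU : V `<=` Uset)
  (Vb : V `<=` `]- b0, b0]%classic) (Vnm : ~ l.-caratheodory V).

Definition sp : R := b0 * 2 + 2.
Definition cs (k : nat) : R := k%:R * sp.
Definition Wset := [set t | exists k, V (t - cs k)].
Definition Mset a := [set t | exists k, Nset a (t - cs k)].
Definition Ecell k := `]- b0 + cs k, b0 + cs k]%classic.
Definition th t := xget 0%N [set k | V (t - cs k)].

Lemma sp_gt0 : 0 < sp.
Proof. rewrite /sp. have := b0ge. lra. Qed.

Lemma Wcell {k t} : V (t - cs k) -> Ecell k t.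
Proof.
move=> /Vb; rewrite /Ecell /= !in_itv /= => /andP [h1 h2].
apply/andP; split; lra.
Qed.

Lemma le_cell {k k' t} : Ecell k t -> Ecell k' t -> (k <= k')%N.
Proof.
rewrite /Ecell /= !in_itv /= => /andP [h1 h2] /andP [h3 h4].
rewrite leqNgt; apply/negP => kk.
have : cs k' + sp <= cs k.
  rewrite /cs -[X in _ + X]mul1r -mulrDl ler_wpM2r ?(ltW sp_gt0) //.
  by rewrite natr1 ler_nat.
rewrite /sp; lra.
Qed.

Lemma cell_disj {k k' t} : Ecell k t -> Ecell k' t -> k = k'.
Proof.
by move=> h1 h2; apply/eqP; rewrite eqn_leq (le_cell h1 h2) (le_cell h2 h1).
Qed.

Lemma th_eq {k t} : V (t - cs k) -> th t = k.
Proof.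
move=> Vk; apply: xget_unique => // y Vy.
exact: cell_disj (Wcell Vy) (Wcell Vk).
Qed.

Lemma Mset_null a : l (Mset a) = 0%E.
Proof.
apply/eqP; rewrite eq_le outer_measure_ge0 andbT.
have sub : Mset a `<=` \bigcup_k sh (cs k) (Nset a).
  by move=> t [k h]; exists k.
apply: (le_trans (le_outer_measure l _ _ sub)).
apply: (le_trans (outer_measure_sigma_subadditive l _)).
rewrite eseries0 // => k _ _.
exact: (etrans (l_sh (cs k) (Nset a)) (Nset_null a)).
Qed.

Lemma V_nonempty : exists v, V v.
Proof.
apply: contrapT => nV; apply: Vnm.
have -> : V = set0 by apply/seteqP; split => // x Vx; apply: nV; exists x.
exact: caratheodory_measurable_set0.
Qed.

Lemma at_point d v a : V v -> Nset a v ->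
  [/\ Wset (v + cs d), Mset a (v + cs d) & th (v + cs d) = d].
Proof.
move=> Vv Nv; split.
- by exists d; rewrite addrK.
- by exists d; rewrite addrK.
- by apply: th_eq; rewrite addrK.
Qed.

Definition gen (r : R) (a : K) (t : R) : R :=
  if `[< Wset t /\ Mset a t >] then Hfam r (th t) else 0.


Definition Xset : set (K -> R -> R) := [set gen r | r in [set: R]].

Lemma gen_inj : injective gen.
Proof.
move=> r r' e; apply: contrapT => rr.
pose rr2 : 'I_2 -> R := fun i => if i == ord0 then r else r'.
have rinj : injective rr2.
  move=> i j; rewrite /rr2.
  case: (eqVneq i ord0) => hi; case: (eqVneq j ord0) => hj //.
  - by rewrite hi hj.
  - by move=> h; exfalso; exact: rr (esym h).
  - move=> _; apply: val_inj; move: hi hj.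
    by case: i => [[|[|i]] ?] //; case: j => [[|[|j]] ?].
have [d hd] := Hfam_witness 2 rr2 (fun i => if i == ord0 then 1%Q else 0%Q) rinj.
have [v Vv] := V_nonempty.
have [a Na] := VU _ Vv.
have [Wt Mt tht] := at_point d v a Vv Na.
have := congr1 (fun f => f a (v + cs d)) e; rewrite /gen /=.
rewrite (asboolT (conj Wt Mt)) tht.
have := hd ord0; have := hd (@Ordinal 2 1 erefl).
rewrite /rr2 /= => -> ->.
by rewrite rmorph0 rmorph1 => /eqP; rewrite oner_eq0.
Qed.

Lemma Xcard : (Xset #= [set: R])%card.
Proof. by apply: inj_card_eq => x y _ _; exact: gen_inj. Qed.


Lemma choose_r n (x : 'I_n -> K -> R -> R) : (forall i, Xset (x i)) ->
  exists r : 'I_n -> R, forall i, gen (r i) = x i.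
Proof.
move=> Xx.
have [f hf] := @choice _ _ (fun i ri => gen ri = x i) (fun i =>
  let: ex_intro2 ri _ e := Xx i in ex_intro _ ri e).
by exists f.
Qed.

Lemma indep_main n (x : 'I_n -> K -> R -> R) (P : {mpoly R[n]}) :
  injective x -> (forall i, Xset (x i)) -> P != 0 ->
  peval P x <> (fun _ _ => 0).
Proof.
move=> xinj Xx P0.
have [r er] := choose_r n x Xx.
have rinj : injective r.
  by move=> i j e; apply: xinj; rewrite -!er e.
have [w hw] : exists w : 'I_n -> rat, meval (fun i => ratr (w i)) P != 0.
  apply: contrapT => H; move/negP: P0; apply; apply/eqP.
  apply: mpoly_rat_zero => w; apply/eqP; apply: contrapT => h.
  by apply: H; exists w; apply/negP.
have [d hd] := Hfam_witness n r w rinj.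
have [v Vv] := V_nonempty.
have [a Na] := VU _ Vv.
have [Wt Mt tht] := at_point d v a Vv Na.
move=> e; have := congr1 (fun f => f a (v + cs d)) e; rewrite /peval /=.
have -> : (fun i => x i a (v + cs d)) = (fun i => ratr (w i)).
  apply: funext => i; rewrite -er /gen (asboolT (conj Wt Mt)) tht.
  exact: hd.
by move/eqP; rewrite (negbTE hw).
Qed.


Lemma cell_cara k : l.-caratheodory (Ecell k).
Proof. exact: (sub_caratheodory (wlength idfun) (measurable_itv _)). Qed.

Lemma an_main n (x : 'I_n -> K -> R -> R) (P : {mpoly R[n]}) :
  (forall i, Xset (x i)) -> P@_0%MM = 0 ->
  peval P x <> (fun _ _ => 0) -> AN lt (peval P x).
Proof.
move=> Xx P0 nz.
have [r er] := choose_r n x Xx.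
pose Psi d := meval (fun i => Hfam (r i) d) P.
have px a t : peval P x a t = if `[< Wset t /\ Mset a t >] then Psi (th t) else 0.
  rewrite /peval /= (meval_eq _ (v2 := fun i => gen (r i) a t)); last by move=> i; rewrite er.
  rewrite /gen; case: ifP => _ //.
  by rewrite meval_zero.
have [a1 [t1 v1]] : exists a t, peval P x a t != 0.
  apply: contrapT => H; apply: nz; apply: funext => a; apply: funext => t.
  apply/eqP; apply: contrapT => h; apply: H; exists a, t; exact/negP.
move: v1; rewrite px; case: ifPn => [/asboolP [Wt1 Mt1] Psi0|]; last by rewrite eqxx.
set d0 := th t1 in Psi0.
pose g t := if `[< Wset t >] then Psi (th t) else 0.
split.
  move=> a; apply: (null_meas _ (Mset a) (Mset_null a)) => t nM.
  by rewrite px; case: ifPn => // /asboolP [_ ?].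
exists g; split.
  move=> mg; apply: Vnm.
  have mG := mg measurableT (~` [set 0]) (measurableC (measurable_set1 0)).
  have mGE : l.-caratheodory (([set: R] `&` g @^-1` (~` [set 0])) `&` Ecell d0).
    exact: (@measurableI _ (lebesgueR R) _ _ mG (cell_cara d0)).
  apply: (cara_shE (cs d0)).
  suff <- : ([set: R] `&` g @^-1` (~` [set 0])) `&` Ecell d0 = sh (cs d0) V by [].
  apply/seteqP; split => t.
    move=> [[_ gt] Et]; rewrite /sh /=.
    move: gt; rewrite /g /preimage /=; case: ifPn => [/asboolP [k Vk] _ | _]; last by move=> /(_ erefl).
    by rewrite -(cell_disj (Wcell Vk) Et).
  rewrite /sh /= => Vt; split; last exact: Wcell.
  split => //; rewrite /g (asboolT (ex_intro _ d0 Vt)) (th_eq Vt).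
  exact/eqP.
apply: aeW => t.
have [[k Vk]|nW] := pselect (Wset t).
  have [a [b ba Fb]] := VU _ Vk.
  move=> U nU; exists b => a' ba'.
  have Ma' : Mset a' t by exists k; exists b.
  rewrite px (asboolT (conj (ex_intro _ k Vk) Ma')).
  move: nU; rewrite /g /= (asboolT (ex_intro _ k Vk)) => nU.
  exact: nbhs_singleton nU.
move=> U nU; exists a1 => a' _.
rewrite px ifF; last by apply/negP => /asboolP [].
move: nU; rewrite /g /= ifF; last by apply/negP => /asboolP.
by move=> nU; exact: nbhs_singleton nU.
Qed.

Lemma main_cells : @strongly_algebrable R K R (@AN R K lt).
Proof.
exists Xset; split; first exact: Xcard.
split.
  by move=> n x P xinj Xx P0; exact: indep_main.
by move=> n x P Xx P0 nz; exact: an_main.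
Qed.

End Cells.

End Main.

Theorem mainTheorem15 (R : realType) (K : Type) (lt : K -> K -> Prop) :
  @initial_ordinal K lt -> @card_is_addN R K ->
  @strongly_algebrable R K R (@AN R K lt).
Proof.
move=> [[_ _ tri _] seg] [[F [Fnull Unn]] small].
have [b0 [V [b0ge VU Vb Vnm]]] := nonmeas_sub _ (Uset_nonnull R K lt F Fnull Unn tri).
exact: (main_cells R K lt F Fnull small seg b0 V b0ge VU Vb Vnm).
Qed.
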